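(* Let $n\ge1$, $m\ge0$ and let $0$ be the all-zero vertex of the dYoke graph $Z_{n,m}$. Then $\operatorname{ecc}_{Z_{n,m}}(0)=\operatorname{ecc}_{Y_{n,m}}(0)$; explicitly: (1) if $n=1$, $\operatorname{ecc}_{Z_{n,m}}(0)=\binom{\lceil m/2\rceil+1}{2}+\binom{\lfloor m/2\rfloor+1}{2}$; (2) if $0\le m\le n$, $\operatorname{ecc}_{Z_{n,m}}(0)=\lfloor n(m+1)/2\rfloor$; (3) if $2\le n\le m$, with $d_0=\binom{\lfloor (m+n)/2\rfloor+1}{2}+\binom{\lceil (m-n)/2\rceil+1}{2}$: (a) if $2\mid(m-n)$ or $n\le\lceil (m+1)/2\rceil$, then $\operatorname{ecc}_{Z_{n,m}}(0)=d_0$; (b) otherwise $\operatorname{ecc}_{Z_{n,m}}(0)=d_0+n-\lceil (m+1)/2\rceil$.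
   Context: For integers $n\ge1$, $m\ge0$, the Yoke graph $Y_{n,m}$ has vertices the tuples $v=(v_0,\dots,v_{m+1})$ with $v_0,v_{m+1}\in\mathbb{Z}_n$, $v_1,\dots,v_m\in\{0,1\}$, $\sum v_i\equiv0\pmod n$; the dYoke graph $Z_{n,m}$ is defined identically but with $v_1,\dots,v_m\in\{-1,0,1\}$. In both, $u\sim v$ iff there is $0\le i\le m$ with $u_j=v_j$ for $j\notin\{i,i+1\}$ and either ($u_i=v_i+1$, $u_{i+1}=v_{i+1}-1$) or ($u_i=v_i-1$, $u_{i+1}=v_{i+1}+1$), bucket entries (indices $0,m+1$) computed modulo $n$. $\operatorname{ecc}_G(x)$ is the maximum distance from $x$ to a vertex of $G$. *)

(* Defs.v *)
From mathcomp Require Import all_boot all_order all_algebra.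
Unset Printing Implicit Defensive.
Import Order.TTheory GRing.Theory Num.Theory.
Local Open Scope ring_scope.

(* Bucket entries v_0, v_{m+1} represent
   elements of Z_n by their canonical representatives in [0,n). *)
Definition tup (m : nat) := {ffun 'I_(m.+2) -> int}.

Definition coord (m : nat) (v : tup m) (j : nat) : int := v (inord j).

Definition is_bucket (m j : nat) : bool := (j == 0)%N || (j == m.+1)%N.

(* lo = 0 gives the Yoke graph (middle entries in {0,1}),
   lo = -1 gives the dYoke graph (middle entries in {-1,0,1}). *)
Definition vert (lo : int) (n m : nat) (v : tup m) : Prop :=
  [/\ 0 <= coord m v 0 < n%:Z, 0 <= coord m v m.+1 < n%:Z,
      (forall j : nat, (1 <= j <= m)%N -> lo <= coord m v j <= 1)
    & (n%:Z %| \sum_(i < m.+2) v i)%Z].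

Definition entry_eq (n m j : nat) (a b : int) : Prop :=
  if is_bucket m j then (a = b %[mod n%:Z])%Z else a = b.

(* u ~ v : a unit moves between positions i and i+1 (0 <= i <= m) *)
Definition adj (n m : nat) (u v : tup m) : Prop :=
  exists i : nat, (i <= m)%N /\
    (forall j : nat, (j <= m.+1)%N -> j != i -> j != i.+1 ->
        coord m u j = coord m v j) /\
    ((entry_eq n m i (coord m u i) (coord m v i + 1) /\
      entry_eq n m i.+1 (coord m u i.+1) (coord m v i.+1 - 1)) \/
     (entry_eq n m i (coord m u i) (coord m v i - 1) /\
      entry_eq n m i.+1 (coord m u i.+1) (coord m v i.+1 + 1))).

Fixpoint walk {T : Type} (V : T -> Prop) (E : T -> T -> Prop)
    (k : nat) (x y : T) : Prop :=
  match k with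
  | 0 => x = y
  | k'.+1 => exists z, V z /\ E x z /\ walk V E k' z y
  end.

Definition ecc_is {T : Type} (V : T -> Prop) (E : T -> T -> Prop)
    (x : T) (d : nat) : Prop :=
  (forall y, V y -> exists k, (k <= d)%N /\ walk V E k x y) /\
  (exists y, V y /\ forall k, (k < d)%N -> ~ walk V E k x y).

Definition zero_vertex (m : nat) : tup m := [ffun => 0%R].

Definition eccY (n m : nat) (d : nat) : Prop :=
  ecc_is (vert 0 n m) (adj n m) (@zero_vertex m) d.
Definition eccZ (n m : nat) (d : nat) : Prop :=
  ecc_is (vert (-1) n m) (adj n m) (@zero_vertex m) d.

(* Main.v *)
Require Import Defs.
From mathcomp Require Import all_boot all_order all_algebra.
From mathcomp Require Import zify ring lra.
Import Order.TTheory GRing.Theory Num.Theory.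


Section P1.
Local Open Scope ring_scope.

Definition tri (x : nat) : nat := (x * x.+1)%N.

Fixpoint isum (N : nat) (f : nat -> int) : int :=
  match N with 0%N => 0 | N'.+1 => isum N' f + f N' end.

Lemma isumE N (f : nat -> int) : \sum_(j < N) f j = isum N f.
Proof. elim: N => [|N IH]; first by rewrite big_ord0. by rewrite big_ord_recr /= IH. Qed.

Lemma isum_ext N (f g : nat -> int) : (forall j, (j < N)%N -> f j = g j) -> isum N f = isum N g.
Proof. elim: N => [//|N IH] H /=. rewrite IH ?H // => j hj; apply: H; lia. Qed.

Lemma isum_le N (f g : nat -> int) : (forall j, (j < N)%N -> f j <= g j) -> isum N f <= isum N g.
Proof. elim: N => [//|N IH] H /=. have := IH (fun j hj => H j (ltn_trans hj (ltnSn N))).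
have := H N (ltnSn N). lia. Qed.

Lemma isumD N (f g : nat -> int) : isum N (fun j => f j + g j) = isum N f + isum N g.
Proof. elim: N => [//|N IH] /=. rewrite IH. lia. Qed.

Lemma isum_ge0 N (f : nat -> int) : (forall j, (j < N)%N -> 0 <= f j) -> 0 <= isum N f.
Proof. move=> H. have := isum_le N (fun _ => 0) f H. 
have -> : isum N (fun _ => 0) = 0 by elim: N {H} => //= N ->. done. Qed.

Lemma isum_const N (c : int) : isum N (fun _ => c) = c * N%:Z.
Proof. elim: N => [|N IH] /=; first by rewrite mulr0. rewrite IH. lia. Qed.

Lemma isum_le_ind (N i : nat) (a b : nat -> int) :
  (forall j : nat, (j < N)%N -> a j <= b j + (if j == i then 1 else 0)) ->
  isum N a <= isum N b + (if (i < N)%N then 1 else 0).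
Proof.
elim: N => [|N IH] H /=; first by rewrite ?ltn0; lia.
have h1 := IH (fun j hj => H j (ltn_trans hj (ltnSn N))).
have h2 := H N (ltnSn N).
move: h1 h2; case: (eqVneq N i) => [<-|hne]; rewrite ?ltnn ?ltnSn ?eqxx; first lia.
case: ifP => hi; case: ifP => hi'; move: hne hi hi'; lia.
Qed.

Lemma isum_eq_ind (N i : nat) (a b : nat -> int) :
  (forall j : nat, (j < N)%N -> a j + (if j == i then 1 else 0) = b j) ->
  isum N a + (if (i < N)%N then 1 else 0) = isum N b.
Proof.
elim: N => [|N IH] H /=; first by rewrite ?ltn0; lia.
have h1 := IH (fun j hj => H j (ltn_trans hj (ltnSn N))).
have h2 := H N (ltnSn N).
move: h1 h2; case: (eqVneq N i) => [<-|hne]; rewrite ?ltnn ?ltnSn ?eqxx; first lia.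
case: ifP => hi; case: ifP => hi'; move: hne hi hi'; lia.
Qed.

Lemma isum_ind (N i : nat) (c : int) :
  isum N (fun k => if k == i then c else 0) = if (i < N)%N then c else 0.
Proof.
elim: N => [|N IH] //=. rewrite IH.
case: ifP => hi; case: ifP => hi'; case: ifP => hi''; move: hi hi' hi''; lia.
Qed.

Lemma isum_KmJ (N K : nat) :
  2 * isum N (fun j => ((K - j)%N : int)) + (tri (K - N))%:Z = (tri K)%:Z.
Proof.
elim: N => [|N IH] /=; first by rewrite subn0; lia.
rewrite /tri in IH *.
have [h|h] : (K - N = 0 \/ K - N = (K - N.+1).+1)%N by lia.
  have h' : (K - N.+1 = 0)%N by lia.
  move: IH; rewrite h h'; lia.
move: IH; rewrite h; set x := (K - N.+1)%N; nia.
Qed.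

Lemma isum_JmS (N S : nat) :
  2 * isum N (fun j => ((j - S)%N : int)) = ((N - S) * (N - S).-1)%N%:Z.
Proof.
elim: N => [|N IH] /=; first by lia.
rewrite mulrDr IH.
have [h|h] : (N < S \/ S <= N)%N by lia.
  have -> : (N - S = 0)%N by lia.
  have -> : (N.+1 - S = 0)%N by lia. lia.
have -> : (N.+1 - S = (N - S).+1)%N by lia.
set x := (N - S)%N; nia.
Qed.

Lemma isum_absK (M K : nat) : (K < M)%N ->
  2 * isum M (fun j => `|(j : int) - K%:Z|) = (tri K + tri (M.-1 - K))%N%:Z.
Proof.
move=> hK.
have -> : isum M (fun j => `|(j : int) - K%:Z|) =
   isum M (fun j => ((K - j)%N : int)) + isum M (fun j => ((j - K)%N : int)).
  rewrite -isumD; apply: isum_ext => j _; lia.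
rewrite mulrDr.
have h1 := isum_KmJ M K. have h2 := isum_JmS M K.
move: h1 h2; have -> : (K - M = 0)%N by lia.
rewrite /tri.
have -> : ((M - K).-1 = M.-1 - K)%N by lia.
have -> : (M - K = (M.-1 - K).+1)%N by lia.
set y := (M.-1 - K)%N. nia.
Qed.

Lemma isum_sign (M k : nat) (c : int) :
  isum M (fun j => if (k <= j)%N then c else - c) = c * ((M : int) - 2 * (minn k M : int)).
Proof.
elim: M => [|M IH] /=; first by rewrite minn0; lia.
rewrite IH. case: (leqP k M) => h.
  have -> : minn k M.+1 = k by lia.
  have -> : ((M.+1)%:Z = M%:Z + 1) by lia. ring.
have -> : minn k M.+1 = M.+1 by lia.
have -> : ((M.+1)%:Z = M%:Z + 1) by lia. ring.
Qed.

Lemma isum_abs_lb1 (M k : nat) (u : int) : (k < M)%N -> u <= k%:Z -> (2 * k <= M.-1)%N ->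
  ((tri k + tri (M.-1 - k))%N%:Z <= 2 * isum M (fun j => `|(j : int) - u|)).
Proof.
move=> hk hu h2.
rewrite -isum_absK //.
have H : isum M (fun j => `|(j : int) - k%:Z| + (if (k <= j)%N then (k%:Z - u) else - (k%:Z - u)))
   <= isum M (fun j => `|(j : int) - u|).
  apply: isum_le => j hj; case: ifP => hkj; lia.
move: H; rewrite isumD isum_sign.
have -> : minn k M = k by lia.
have : 0 <= (k%:Z - u) * (M%:Z - 2 * k%:Z) by apply: mulr_ge0; lia.
lia.
Qed.

Lemma isum_abs_lb2 (M k : nat) (u : int) : (k < M)%N -> k%:Z <= u -> (M.-1 <= 2 * k)%N ->
  ((tri k + tri (M.-1 - k))%N%:Z <= 2 * isum M (fun j => `|(j : int) - u|)).
Proof.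
move=> hk hu h2.
rewrite -isum_absK //.
have H : isum M (fun j => `|(j : int) - k%:Z| - (if (k.+1 <= j)%N then (u - k%:Z) else - (u - k%:Z)))
   <= isum M (fun j => `|(j : int) - u|).
  apply: isum_le => j hj; case: ifP => hkj; lia.
have E : isum M (fun j => `|(j : int) - k%:Z| - (if (k.+1 <= j)%N then (u - k%:Z) else - (u - k%:Z)))
   = isum M (fun j => `|(j : int) - k%:Z|) - isum M (fun j => (if (k.+1 <= j)%N then (u - k%:Z) else - (u - k%:Z))).
  have := isumD M (fun j => `|(j : int) - k%:Z| - (if (k.+1 <= j)%N then (u - k%:Z) else - (u - k%:Z)))
     (fun j => (if (k.+1 <= j)%N then (u - k%:Z) else - (u - k%:Z))).
  have -> : isum M (fun j => `|(j : int) - k%:Z| - (if (k.+1 <= j)%N then (u - k%:Z) else - (u - k%:Z)) + (if (k.+1 <= j)%N then (u - k%:Z) else - (u - k%:Z)))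
     = isum M (fun j => `|(j : int) - k%:Z|) by apply: isum_ext => j _; ring.
  lia.
move: H; rewrite E isum_sign.
have -> : minn k.+1 M = k.+1 by lia.
have : (u - k%:Z) * (M%:Z - 2 * (k.+1)%:Z) <= 0.
  apply: mulr_ge0_le0; lia.
lia.
Qed.

End P1.

Set Implicit Arguments.
Notation cd := Defs.coord.

Section P2.
Local Open Scope ring_scope.

Definition Pf (m : nat) (v : tup m) (j : nat) : int := isum j (fun i => cd m v i.+1).
Definition Ff (m : nat) (v : tup m) (t : int) : int := isum m.+1 (fun j => `|t + Pf v j|).
Definition valid (n m : nat) (v : tup m) (t : int) : Prop := (n%:Z %| t - cd m v 0)%Z.

Lemma modeq_dvd (n : nat) (a b : int) : (a = b %[mod n%:Z])%Z -> (n%:Z %| a - b)%Z.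
Proof. by move=> H; rewrite -eqz_mod_dvd; apply/eqP. Qed.

Lemma move_rel (n m : nat) (u w : tup m) (i : nat) (s : int) (t : int) :
 (i <= m)%N ->
 (forall j, (j <= m.+1)%N -> j != i -> j != i.+1 -> cd m w j = cd m u j) ->
 ((1 <= i)%N -> cd m w i = cd m u i - s) ->
 ((i.+1 <= m)%N -> cd m w i.+1 = cd m u i.+1 + s) ->
 (i = 0%N -> (n%:Z %| cd m w 0 - (cd m u 0 - s))%Z) ->
 valid n u t ->
 valid n w (t - (if i == 0%N then s else 0)) /\
 forall j, (j <= m)%N -> (t - (if i == 0%N then s else 0)) + Pf w j
     = t + Pf u j - (if j == i then s else 0).
Proof.
move=> him Hoth Hi Hi1 H0 hv; split.
  case: (eqVneq i 0%N) => [hi0|hi0].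
    have := H0 hi0. move: hv; rewrite /valid => h1 h2.
    have -> : t - s - cd m w 0 = (t - cd m u 0) - (cd m w 0 - (cd m u 0 - s)) by ring.
    by rewrite rpredB.
  rewrite subr0 /valid Hoth //; apply/negP => /eqP h; move: hi0; lia.
have HP : forall j, (j <= m)%N -> Pf w j = Pf u j - (if (1 <= i <= j)%N then s else 0)
                                        + (if (i.+1 <= j)%N then s else 0).
  elim=> [|j IH] hj; first by rewrite /Pf /=; case: ifP; lia.
  rewrite /Pf /= -/(Pf w j) -/(Pf u j) IH; last by lia.
  case: (eqVneq j.+1 i) => [hji|hji].
    subst i. rewrite Hi; last by lia.
    have -> : (1 <= j.+1 <= j)%N = false by lia.
    have -> : (1 <= j.+1 <= j.+1)%N = true by lia.
    have -> : (j.+2 <= j)%N = false by lia.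
    have -> : (j.+2 <= j.+1)%N = false by lia. lia.
  case: (eqVneq j.+1 i.+1) => [hji1|hji1].
    have hji' : j = i by lia. subst j.
    rewrite Hi1; last by lia.
    have -> : (1 <= i <= i)%N = (1 <= i)%N by lia.
    have -> : (1 <= i <= i.+1)%N = (1 <= i)%N by lia.
    have -> : (i.+1 <= i)%N = false by lia.
    have -> : (i.+1 <= i.+1)%N = true by lia. lia.
  rewrite Hoth //; last by lia.
  have E1 : (1 <= i <= j.+1)%N = (1 <= i <= j)%N by move: hji; lia.
  have E2 : (i.+1 <= j.+1)%N = (i.+1 <= j)%N by move: hji1; lia.
  rewrite E1 E2; lia.
move=> j hj; rewrite HP //.
case E1: (i == 0%N); case E2: (0 < i <= j)%N; case E3: (i < j)%N; case E4: (j == i);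
  move: E1 E2 E3 E4; lia.
Qed.


Lemma entry_eqP (n m j : nat) (a b : int) : entry_eq n m j a b ->
  (is_bucket m j = false -> a = b) /\ (is_bucket m j -> (n%:Z %| a - b)%Z).
Proof.
rewrite /entry_eq; case: ifP => hb H; split => // _.
exact: modeq_dvd.
Qed.

Lemma lip (n m : nat) (u w : tup m) (t : int) :
  adj n m u w -> valid n u t -> exists t', valid n w t' /\ Ff w t' <= Ff u t + 1.
Proof.
move=> [i [him [Hoth Hc]]] hv.
have key : forall s : int, `|s| <= 1 -> entry_eq n m i (cd m u i) (cd m w i + s) ->
    entry_eq n m i.+1 (cd m u i.+1) (cd m w i.+1 - s) ->
    exists t', valid n w t' /\ Ff w t' <= Ff u t + 1.
  move=> s hs /entry_eqP [h1 h1'] /entry_eqP [h2 h2'].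
  have Hi : (1 <= i)%N -> cd m w i = cd m u i - s.
    move=> hi; rewrite h1; first ring. rewrite /is_bucket; lia.
  have Hi1 : (i.+1 <= m)%N -> cd m w i.+1 = cd m u i.+1 + s.
    move=> hi; rewrite h2; first ring. rewrite /is_bucket; lia.
  have H0 : i = 0%N -> (n%:Z %| cd m w 0 - (cd m u 0 - s))%Z.
    move=> hi; subst i; have hd := h1' isT.
    have -> : cd m w 0 - (cd m u 0 - s) = - (cd m u 0 - (cd m w 0 + s)) by ring.
    by rewrite rpredN.
  have [hv' hP] := @move_rel n m u w i s t him
    (fun j hj a b => esym (Hoth j hj a b)) Hi Hi1 H0 hv.
  exists (t - (if i == 0%N then s else 0)); split => //.
  have := @isum_le_ind m.+1 i (fun j => `|t - (if i == 0%N then s else 0) + Pf w j|)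
     (fun j => `|t + Pf u j|).
  rewrite /Ff; have -> : (i < m.+1)%N by lia. apply => j hj.
  rewrite hP; last by lia.
  case: ifP => _; last by rewrite subr0 addr0.
  by apply: (le_trans (ler_normB _ _)); rewrite lerD2l.
case: Hc => [[ha hb]|[ha hb]].
  by apply: (key 1).
by apply: (key (-1)); rewrite ?normrN ?opprK.
Qed.

End P2.


Section P3.
Local Open Scope ring_scope.

Lemma walk_app {T : Type} (V : T -> Prop) (E : T -> T -> Prop) k x y z :
  walk V E k x y -> V z -> E y z -> walk V E k.+1 x z.
Proof.
elim: k x => [|k IH] x /=.
  move=> -> hz hyz; exists z; split => //.
move=> [w [hw [hxw hwy]]] hz hyz; exists w; split => //; split => //.
exact: IH hwy hz hyz.
Qed.

Lemma walk_lip (n m : nat) (lo : int) k (x y : tup m) t :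
  walk (vert lo n m) (adj n m) k x y -> valid n x t ->
  exists t', valid n y t' /\ Ff y t' <= Ff x t + k%:Z.
Proof.
elim: k x t => [|k IH] x t /=.
  move=> -> hv; exists t; split => //; lia.
move=> [z [hz [hxz hzy]]] hv.
have [t1 [hv1 h1]] := lip hxz hv.
have [t2 [hv2 h2]] := IH z t1 hzy hv1.
exists t2; split => //; lia.
Qed.

Lemma cd_zero m j : cd m (zero_vertex m) j = 0.
Proof. by rewrite /Defs.coord /zero_vertex ffunE. Qed.

Lemma Ff_zero m : Ff (zero_vertex m) 0 = 0.
Proof.
rewrite /Ff. have -> : isum m.+1 (fun j => `|0 + Pf (zero_vertex m) j|) = isum m.+1 (fun _ => 0).
  apply: isum_ext => j _. rewrite add0r.
  have -> : Pf (zero_vertex m) j = 0.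
    rewrite /Pf. elim: j => [|j IH] //=. by rewrite IH cd_zero addr0.
  by [].
by rewrite isum_const mul0r.
Qed.

Lemma valid_zero n m : valid n (zero_vertex m) 0.
Proof. by rewrite /valid cd_zero subrr dvdz0. Qed.

Lemma lower_bound (n m : nat) (lo : int) (y : tup m) (d : nat) :
  (forall t, valid n y t -> d%:Z <= Ff y t) ->
  forall k, (k < d)%N -> ~ walk (vert lo n m) (adj n m) k (zero_vertex m) y.
Proof.
move=> H k hk hw.
have [t [hv ht]] := @walk_lip n m lo k _ _ 0 hw (valid_zero n m).
have := H t hv. rewrite Ff_zero in ht. lia.
Qed.

Lemma argmax_ex (g : nat -> int) N : exists i, (i <= N)%N /\ forall j, (j <= N)%N -> g j <= g i.
Proof.
elim: N => [|N [i [hi H]]]; first by exists 0%N; split => // j; rewrite leqn0 => /eqP ->.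
case: (leP (g i) (g N.+1)) => h.
  exists N.+1; split => // j; rewrite leq_eqVlt => /orP [/eqP -> //|hj].
  exact: le_trans (H j hj) h.
exists i; split; first lia.
move=> j; rewrite leq_eqVlt => /orP [/eqP -> |hj]; first exact: ltW.
exact: H.
Qed.

End P3.


Section P4.
Local Open Scope ring_scope.

Definition mv (n m : nat) (v : tup m) (i : nat) (s : int) : tup m :=
  [ffun k : 'I_(m.+2) => let x := v k + (if (k : nat) == i.+1 then s else 0)
      - (if (k : nat) == i then s else 0) in
      if is_bucket m k then (x %% n%:Z)%Z else x].

Lemma cd_mv n m v i s j : (j <= m.+1)%N ->
  cd m (mv n v i s) j = let x := cd m v j + (if j == i.+1 then s else 0)
      - (if j == i then s else 0) in if is_bucket m j then (x %% n%:Z)%Z else x.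
Proof. move=> hj. by rewrite /Defs.coord /mv ffunE inordK. Qed.

Lemma cd_ffun m (v : tup m) (k : 'I_(m.+2)) : cd m v k = v k.
Proof. by rewrite /Defs.coord inord_val. Qed.

Lemma sum_tup m (v : tup m) : \sum_(k < m.+2) v k = isum m.+2 (fun k => cd m v k).
Proof. rewrite -isumE. apply: eq_bigr => k _. by rewrite cd_ffun. Qed.

Lemma isum_dvd (n : int) N (f : nat -> int) : (forall j, (j < N)%N -> (n %| f j)%Z) -> (n %| isum N f)%Z.
Proof.
elim: N => [|N IH] H /=; first exact: dvdz0.
rewrite rpredD //; [apply: IH => j hj; apply: H; lia | exact: H].
Qed.

Lemma dvd_mod (n : nat) (x : int) : (n%:Z %| (x %% n%:Z)%Z - x)%Z.
Proof.
apply/dvdzP; exists (- (x %/ n%:Z)%Z). rewrite {2}(divz_eq x n%:Z). ring.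
Qed.

Lemma mod_small (n : nat) (x : int) : 0 <= x -> x < n%:Z -> (x %% n%:Z)%Z = x.
Proof. move=> h1 h2. by rewrite modz_small // h1 h2. Qed.

Lemma mv_step (n m : nat) (lo : int) (v : tup m) (t : int) (i : nat) (s : int) :
  (0 < n)%N -> lo <= 0 -> vert lo n m v -> valid n v t -> (i <= m)%N ->
  (s = 1 \/ s = -1) -> 0 < s * (t + Pf v i) ->
  ((1 <= i)%N -> lo <= cd m v i - s <= 1) ->
  ((i.+1 <= m)%N -> lo <= cd m v i.+1 + s <= 1) ->
  exists t', [/\ vert lo n m (mv n v i s), adj n m (mv n v i s) v,
     valid n (mv n v i s) t' & Ff (mv n v i s) t' + 1 = Ff v t].
Proof.
move=> hn hlo [hb0 hbm hmid hsum] hv him hs hpos hci hci1.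
set w := mv n v i s.
have Hoth : forall j, (j <= m.+1)%N -> j != i -> j != i.+1 -> cd m w j = cd m v j.
  move=> j hj h1 h2; rewrite /w cd_mv // /= (negPf h1) (negPf h2) addr0 subr0.
  case: ifP => // hb. apply: mod_small.
  - move: hb; rewrite /is_bucket => /orP [/eqP ->|/eqP ->]; lia.
  - move: hb; rewrite /is_bucket => /orP [/eqP ->|/eqP ->]; lia.
have Hi : (1 <= i)%N -> cd m w i = cd m v i - s.
  move=> hi; rewrite /w cd_mv; last lia.
  rewrite /= eqxx. have -> : (i == i.+1) = false by lia.
  have -> : is_bucket m i = false by rewrite /is_bucket; lia. ring.
have Hi1 : (i.+1 <= m)%N -> cd m w i.+1 = cd m v i.+1 + s.
  move=> hi; rewrite /w cd_mv; last lia.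
  rewrite /= eqxx. have -> : (i.+1 == i) = false by lia.
  have -> : is_bucket m i.+1 = false by rewrite /is_bucket; lia. ring.
have H0 : i = 0%N -> (n%:Z %| cd m w 0 - (cd m v 0 - s))%Z.
  move=> hi; subst i. rewrite /w cd_mv // /=.
  have -> : cd m v 0 + 0 - s = cd m v 0 - s by ring.
  exact: dvd_mod.
have [hv' hP] := @move_rel n m v w i s t him Hoth Hi Hi1 H0 hv.
exists (t - (if i == 0%N then s else 0)); split => //.
-
  split.
  + rewrite /w cd_mv // /=; lia.
  + rewrite /w cd_mv // /= /is_bucket eqxx orbT; lia.
  + move=> j hj.
    case: (eqVneq j i) => [hji|hji]; first by subst j; rewrite Hi; [apply: hci|]; lia.
    case: (eqVneq j i.+1) => [hji1|hji1]; first by subst j; rewrite Hi1; [apply: hci1|]; lia.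
    rewrite Hoth //; [exact: hmid | lia].
  + rewrite sum_tup.
    have E : isum m.+2 (fun k => cd m w k) = isum m.+2 (fun k => cd m v k)
       + isum m.+2 (fun k => (if k == i.+1 then s else 0) - (if k == i then s else 0))
       + isum m.+2 (fun k => cd m w k - (cd m v k + (if k == i.+1 then s else 0) - (if k == i then s else 0))).
      rewrite -!isumD. apply: isum_ext => k _; ring.
    have E2 : isum m.+2 (fun k => (if k == i.+1 then s else 0) - (if k == i then s else 0)) = 0.
      have := isumD m.+2 (fun k => (if k == i.+1 then s else 0) - (if k == i then s else 0))
          (fun k => if k == i then s else 0).
      have -> : isum m.+2 (fun k => (if k == i.+1 then s else 0) - (if k == i then s else 0)
          + (if k == i then s else 0)) = isum m.+2 (fun k => (if k == i.+1 then s else 0)).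
        apply: isum_ext => k _; ring.
      rewrite !isum_ind. have -> : (i.+1 < m.+2)%N by lia. have -> : (i < m.+2)%N by lia.
      move=> h; apply/eqP; rewrite -(subr_eq0); apply/eqP; move: h; lia.
    rewrite E E2 addr0 rpredD //; first by rewrite -sum_tup.
    apply: isum_dvd => k hk. rewrite /w cd_mv; last lia.
    rewrite /=. case: ifP => _; first exact: dvd_mod.
    by rewrite subrr dvdz0.
-
  exists i; split => //; split.
    move=> j hj h1 h2; rewrite Hoth //.
  have Ebi : forall j (a b : int), (j <= m.+1)%N -> cd m w j = (if is_bucket m j then (a %% n%:Z)%Z else a) ->
      b = a -> entry_eq n m j (cd m w j) b.
    move=> j a b hj -> ->; rewrite /entry_eq; case: (is_bucket m j) => //; exact: modz_mod.
  have Ew : forall j, (j <= m.+1)%N -> cd m w j = (if is_bucket m j then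
      ((cd m v j + (if j == i.+1 then s else 0) - (if j == i then s else 0)) %% n%:Z)%Z
      else (cd m v j + (if j == i.+1 then s else 0) - (if j == i then s else 0))).
    by move=> j hj; rewrite /w cd_mv.
  have A1 : entry_eq n m i (cd m w i) (cd m v i - s).
    apply: (Ebi i (cd m v i + (if i == i.+1 then s else 0) - (if i == i then s else 0))).
    * lia.
    * apply: Ew; lia.
    * rewrite eqxx (_ : (i == i.+1) = false); [ring | lia].
  have A2 : entry_eq n m i.+1 (cd m w i.+1) (cd m v i.+1 + s).
    apply: (Ebi i.+1 (cd m v i.+1 + (if i.+1 == i.+1 then s else 0) - (if i.+1 == i then s else 0))).
    * lia.
    * apply: Ew; lia.
    * rewrite eqxx (_ : (i.+1 == i) = false); [ring | lia].
  case: hs => hs; subst s; [right|left]; split => //;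
    by [move: A1; rewrite opprK | move: A2; rewrite opprK].
-
  rewrite /Ff.
  have := @isum_eq_ind m.+1 i (fun j => `|t - (if i == 0%N then s else 0) + Pf w j|)
     (fun j => `|t + Pf v j|).
  have -> : (i < m.+1)%N by lia. apply => j hj.
  rewrite hP; last by lia.
  case: (eqVneq j i) => [->|_]; last by rewrite subr0 addr0.
  move: hpos; case: hs => ->; lia.
Qed.

End P4.


Section P5.
Local Open Scope ring_scope.

Lemma mul_le1 (x : int) (c : nat) : (1 < c)%N -> x * c%:Z <= 1 -> x <= 0.
Proof.
move=> hc h. have [hx|hx] : (x <= 0 \/ 1 <= x) by lia. done.
have : c%:Z <= x * c%:Z by rewrite ler_peMl //; lia. lia.
Qed.

Lemma mul_ge1 (x : int) (c : nat) : (0 < c)%N -> 1 <= x * c%:Z -> 1 <= x.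
Proof.
move=> hc h. have [hx|hx] : (x <= 0 \/ 1 <= x) by lia. 2: done.
have : x * c%:Z <= 0 by rewrite mulr_le0_ge0 //. lia.
Qed.

Lemma mul_gem1 (x : int) (c : nat) : (1 < c)%N -> -1 <= x * c%:Z -> 0 <= x.
Proof.
move=> hc h. have [hx|hx] : (x <= -1 \/ 0 <= x) by lia. 2: done.
have : x * c%:Z <= - c%:Z. 
  have -> : x * c%:Z = - ((- x) * c%:Z) by ring.
  rewrite lerN2 ler_peMl //; lia.
lia.
Qed.

Lemma isum_term_le N (f : nat -> int) j : (forall i, (i < N)%N -> 0 <= f i) -> (j < N)%N -> f j <= isum N f.
Proof.
elim: N => [|N IH] H hj //=.
have h0 := @isum_ge0 N f (fun i hi => H i (ltn_trans hi (ltnSn N))).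
case: (eqVneq j N) => [->|hne]; first lia.
have := IH (fun i hi => H i (ltn_trans hi (ltnSn N))) ltac:(lia).
have := H N (ltnSn N). lia.
Qed.

Lemma PfS m (v : tup m) j : Pf v j.+1 = Pf v j + cd m v j.+1.
Proof. by []. Qed.

Lemma descent (n m : nat) (lo : int) (v : tup m) (t : int) :
  (0 < n)%N -> lo <= 0 -> vert lo n m v -> valid n v t -> 0 < Ff v t ->
  exists w t', [/\ vert lo n m w, adj n m w v, valid n w t' & Ff w t' + 1 = Ff v t].
Proof.
move=> hn hlo hv hvt hF.
have [_ _ hmid _] := hv.
set f := fun j => t + Pf v j.
have hcd : forall j, cd m v j.+1 = f j.+1 - f j by move=> j; rewrite /f PfS; ring.
have [[j0 [hj0 hpos]]|hneg] : (exists j, (j <= m)%N /\ 0 < f j) \/ (forall j, (j <= m)%N -> f j <= 0).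
  case: (argmax_ex f m) => i [hi H].
  case: (ltP 0 (f i)) => h; [left; by exists i | right => j hj; exact: le_trans (H j hj) h].
- have [i [hi H]] := argmax_ex (fun j => f j * (m.+2)%:Z - j%:Z) m.
  have fi : 0 < f i.
    have := H j0 hj0. have : 1 <= f j0 by lia. move=> h1 h2.
    have : (m.+2)%:Z <= f j0 * (m.+2)%:Z by rewrite ler_peMl //; lia.
    move=> h3. have : 1 <= f i * (m.+2)%:Z by lia. move/(@mul_ge1 _ m.+2 isT). lia.
  have Hc1 : (1 <= i)%N -> lo <= cd m v i - 1 <= 1.
    move=> hi1. have hk := H i.-1 ltac:(lia).
    have E : i = i.-1.+1 by lia.
    have hc := hcd i.-1. rewrite -E in hc.
    have : 1 <= (f i - f i.-1) * (m.+2)%:Z by rewrite mulrBl; lia.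
    move/(@mul_ge1 _ m.+2 isT) => hb.
    have := hmid i ltac:(lia). lia.
  have Hc2 : (i.+1 <= m)%N -> lo <= cd m v i.+1 + 1 <= 1.
    move=> hi1. have hk := H i.+1 hi1.
    have hc := hcd i.
    have : (f i.+1 - f i) * (m.+2)%:Z <= 1 by rewrite mulrBl; lia.
    move/(@mul_le1 _ m.+2 isT) => hb.
    have := hmid i.+1 ltac:(lia). lia.
  have [t' [h1 h2 h3 h4]] := @mv_step n m lo v t i 1 hn hlo hv hvt hi (or_introl erefl)
     ltac:(by rewrite mul1r) Hc1 Hc2.
  by exists (mv n v i 1), t'.
- have [j0 [hj0 hnz]] : exists j, (j <= m)%N /\ f j < 0.
    case: (boolP [exists j : 'I_(m.+1), f j < 0]) => [/existsP [j hj]|hno].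
      exists j; split => //; exact: ltn_ord j.
    have : Ff v t <= 0; last lia.
    rewrite /Ff. have -> : isum m.+1 (fun j => `|t + Pf v j|) = isum m.+1 (fun _ => 0).
      apply: isum_ext => j hj.
      have : ~~ (f (Ordinal hj) < 0) by move: hno; rewrite negb_exists => /forallP.
      have := hneg j ltac:(lia). rewrite /f /=. lia.
    by rewrite isum_const mul0r.
  have [i [hi H]] := argmax_ex (fun j => - (f j * (m.+2)%:Z) + j%:Z) m.
  have fi : f i < 0.
    have := H j0 hj0. have : f j0 <= -1 by lia. move=> h1 h2.
    have : f j0 * (m.+2)%:Z <= - (m.+2)%:Z.
      have -> : f j0 * (m.+2)%:Z = - ((- f j0) * (m.+2)%:Z) by ring.
      rewrite lerN2 ler_peMl //; lia.
    move=> h3. have : 1 <= (- f i) * (m.+2)%:Z by rewrite mulNr; lia.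
    move/(@mul_ge1 _ m.+2 isT). lia.
  have Hc1 : (1 <= i)%N -> lo <= cd m v i - (-1) <= 1.
    move=> hi1. have hk := H i.-1 ltac:(lia).
    have E : i = i.-1.+1 by lia.
    have hc := hcd i.-1. rewrite -E in hc.
    have : -1 <= (f i.-1 - f i) * (m.+2)%:Z by rewrite mulrBl; lia.
    move/(@mul_gem1 _ m.+2 isT) => hb.
    have := hmid i ltac:(lia). lia.
  have Hc2 : (i.+1 <= m)%N -> lo <= cd m v i.+1 + (-1) <= 1.
    move=> hi1. have hk := H i.+1 hi1.
    have hc := hcd i.
    have : 1 <= (f i.+1 - f i) * (m.+2)%:Z by rewrite mulrBl; lia.
    move/(@mul_ge1 _ m.+2 isT) => hb.
    have := hmid i.+1 ltac:(lia). lia.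
  have [t' [h1 h2 h3 h4]] := @mv_step n m lo v t i (-1) hn hlo hv hvt hi (or_intror erefl)
     ltac:(rewrite mulN1r; move: fi; rewrite /f; lia) Hc1 Hc2.
  by exists (mv n v i (-1)), t'.
Qed.

End P5.


Section P6.
Local Open Scope ring_scope.

Lemma dvd_small (a : int) (n : nat) : (0 < n)%N -> 0 <= a -> a < n%:Z -> (n%:Z %| a)%Z -> a = 0.
Proof. move=> h h1 h2 /dvdzP [q hq]. subst a. have [hq|hq] : (q <= 0 \/ 1 <= q) by lia.
 have : q * n%:Z <= 0 by rewrite mulr_le0_ge0 //. lia.
 have : n%:Z <= q * n%:Z by rewrite ler_peMl //. lia. Qed.

Lemma F0_zero (n m : nat) (lo : int) (v : tup m) (t : int) :
  (0 < n)%N -> vert lo n m v -> valid n v t -> Ff v t = 0 -> v = zero_vertex m.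
Proof.
move=> hn [hb0 hbm hmid hsum] hv hF.
have hz : forall j, (j <= m)%N -> t + Pf v j = 0.
  move=> j hj. have := @isum_term_le m.+1 (fun j => `|t + Pf v j|) j (fun i _ => normr_ge0 _) hj.
  rewrite -/(Ff v t) hF. lia.
have ht : t = 0 by have := hz 0%N isT; rewrite /Pf /= addr0.
have hmid0 : forall j, (1 <= j <= m)%N -> cd m v j = 0.
  move=> j hj. have E : j = j.-1.+1 by lia.
  have h1 := hz j.-1 ltac:(lia). have h2 := hz j ltac:(lia).
  move: h2; rewrite E PfS -E. lia.
have h0 : cd m v 0 = 0.
  apply: (@dvd_small _ n hn); try lia.
  move: hv; rewrite /valid ht sub0r. by rewrite rpredN.
have hP : forall j, (j <= m)%N -> Pf v j = 0 by move=> j hj; have := hz j hj; lia.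
have hm1 : cd m v m.+1 = 0.
  apply: (@dvd_small _ n hn); try lia.
  move: hsum; rewrite sum_tup /= -/(isum m.+1 (fun k => cd m v k)).
  have -> : isum m.+1 (fun k => cd m v k) = 0.
    have -> : isum m.+1 (fun k => cd m v k) = isum m.+1 (fun _ => 0).
      apply: isum_ext => k hk. case: k hk => [|k] hk; [exact: h0 | apply: hmid0; lia].
    by rewrite isum_const mul0r.
  by rewrite add0r.
apply/ffunP => k. rewrite -cd_ffun /zero_vertex ffunE.
have := ltn_ord k. case: (nat_of_ord k) => [|k'] hk; first exact: h0.
case: (eqVneq k' m) => [->|hne]; first exact: hm1.
apply: hmid0; lia.
Qed.

Lemma reach (n m : nat) (lo : int) (K : nat) : (0 < n)%N -> lo <= 0 ->
  forall (v : tup m) (t : int), vert lo n m v -> valid n v t -> Ff v t <= K%:Z ->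
  exists k, (k <= K)%N /\ walk (vert lo n m) (adj n m) k (zero_vertex m) v.
Proof.
move=> hn hlo. elim: K => [|K IH] v t hv hvt hF.
  have hF0 : Ff v t = 0 by have := @isum_ge0 m.+1 (fun j => `|t + Pf v j|) (fun j _ => normr_ge0 _); rewrite -/(Ff v t); lia.
  by exists 0%N; split => //=; rewrite (F0_zero hn hv hvt hF0).
have hF0 : 0 <= Ff v t by have := @isum_ge0 m.+1 (fun j => `|t + Pf v j|) (fun j _ => normr_ge0 _).
case: (eqVneq (Ff v t) 0) => [hF0'|hne].
  by exists 0%N; split => //=; rewrite (F0_zero hn hv hvt hF0').
have [w [t' [h1 h2 h3 h4]]] := descent hn hlo hv hvt ltac:(lia).
have [k [hk hw]] := IH w t' h1 h3 ltac:(lia).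
exists k.+1; split; first lia.
exact: walk_app hw hv h2.
Qed.

End P6.


Section P7.
Local Open Scope ring_scope.

Lemma lipx (m : nat) (x : nat -> int) : (forall j, (j < m)%N -> `|x j.+1 - x j| <= 1) ->
  forall i j, (i <= j <= m)%N -> `|x j - x i| <= (j - i)%N%:Z.
Proof.
move=> H i j /andP [hij hjm].
elim: j hij hjm => [|j IH] hij hjm.
  have -> : i = 0%N by lia. rewrite subrr; lia.
case: (eqVneq i j.+1) => [->|hne]; first by rewrite subrr; lia.
have h1 := IH ltac:(lia) ltac:(lia). have h2 := H j ltac:(lia). lia.
Qed.

Lemma ub_pure (n m b : nat) (x : nat -> int) (r : int) : (0 < n)%N -> (2 * b <= m)%N ->
  (forall j, (j < m)%N -> `|x j.+1 - x j| <= 1) ->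
  exists t, (n%:Z %| t - r)%Z /\
   (2 * isum m.+1 (fun j => `|t - x j|) <= (tri b + tri (m - b))%N%:Z \/
    2 * isum m.+1 (fun j => `|t - x j|) <= (m.+1 * n + 2 * tri b.-1)%N%:Z).
Proof.
move=> hn hb Hx.
have Lx : forall i j, (i <= m)%N -> (j <= m)%N -> `|x j - x i| <= `|(j : int) - (i : int)|.
  move=> i j hi hj. case: (leqP i j) => hij.
    have := @lipx m x Hx i j ltac:(lia). lia.
  have := @lipx m x Hx j i ltac:(lia). lia.
case: (boolP [exists i : 'I_(m.+1), (b <= i <= m - b)%N && (n%:Z %| x i - r)%Z]).
  move=> /existsP [i /andP [hi hdv]].
  exists (x i); split => //; left.
  have hi' := ltn_ord i.
  have hs := @isum_absK m.+1 i hi'. change (m.+1.-1) with m in hs.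
  have h2 : isum m.+1 (fun j => `|x i - x j|) <= isum m.+1 (fun j => `|(j : int) - (i : nat)%:Z|).
    apply: isum_le => j hj. have := Lx i j ltac:(lia) ltac:(lia). lia.
  have h3 : 2 * isum m.+1 (fun j => `|x i - x j|) <= 2 * isum m.+1 (fun j => `|(j : int) - (i : nat)%:Z|).
    by rewrite ler_pM2l.
  rewrite hs in h3. apply: (le_trans h3). rewrite lez_nat /tri.
  move: hi; set ii := nat_of_ord i => hi. nia.
rewrite negb_exists => /forallP hno.
have hno' : forall i, (b <= i <= m - b)%N -> ~ (n%:Z %| x i - r)%Z.
  move=> i hi hd. have := hno (Ordinal (n := m.+1) (m := i) ltac:(lia)). rewrite /= hi hd. done.
set t := x b - ((x b - r) %% n%:Z)%Z.
have htr : (n%:Z %| t - r)%Z.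
  apply/dvdzP; exists ((x b - r) %/ n%:Z)%Z. have := divz_eq (x b - r) n%:Z. rewrite /t.
  move: ((x b - r) %/ n%:Z)%Z ((x b - r) %% n%:Z)%Z => D M. move: (D * n%:Z) => DN. lia.
have hmod : 0 <= ((x b - r) %% n%:Z)%Z < n%:Z by lia.
have hmod0 : ((x b - r) %% n%:Z)%Z != 0.
  apply/eqP => h. apply: (hno' b ltac:(lia)). by apply/dvdz_mod0P.
have Hin : forall d, (d <= m - 2 * b)%N -> t < x (b + d)%N < t + n%:Z.
  elim=> [|d IH] hd.
    rewrite addn0 /t. lia.
  have := IH ltac:(lia). have := Hx (b + d)%N ltac:(lia).
  have -> : (b + d.+1 = (b + d).+1)%N by lia.
  move=> h1 h2.
  have ne1 : x (b + d).+1 != t.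
    apply/eqP => he. apply: (hno' (b + d).+1 ltac:(lia)). by rewrite he.
  have ne2 : x (b + d).+1 != t + n%:Z.
    apply/eqP => he. apply: (hno' (b + d).+1 ltac:(lia)).
    rewrite he. have -> : t + n%:Z - r = (t - r) + n%:Z by ring. by rewrite rpredD // dvdzz.
  move: ne1 ne2 => /eqP ne1 /eqP ne2. lia.
have Hin' : forall j, (b <= j <= m - b)%N -> t < x j < t + n%:Z.
  move=> j hj. have := Hin (j - b)%N ltac:(lia). by have -> : (b + (j - b) = j)%N by lia.
have Hterm : forall j, (j < m.+1)%N ->
   `|t - x j| + `|t + n%:Z - x j| <= n%:Z + 2 * ((b.-1 - j)%N%:Z + (j - (m - b).+1)%N%:Z).
  move=> j hj.
  case: (ltnP j b) => h1.
    have := Lx j b ltac:(lia) ltac:(lia). have := Hin' b ltac:(lia). lia.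
  case: (leqP j (m - b)) => h2.
    have := Hin' j ltac:(lia). lia.
  have := Lx j (m - b)%N ltac:(lia) ltac:(lia). have := Hin' (m - b)%N ltac:(lia). lia.
have Hsum : isum m.+1 (fun j => `|t - x j|) + isum m.+1 (fun j => `|t + n%:Z - x j|)
      <= (m.+1 * n + 2 * tri b.-1)%N%:Z.
  rewrite -isumD.
  apply: le_trans (@isum_le m.+1 _ (fun j => n%:Z + 2 * ((b.-1 - j)%N%:Z + (j - (m - b).+1)%N%:Z)) Hterm) _.
  rewrite isumD isum_const.
  have -> : isum m.+1 (fun j => 2 * ((b.-1 - j)%N%:Z + (j - (m - b).+1)%N%:Z))
     = 2 * isum m.+1 (fun j => ((b.-1 - j)%N%:Z)) + 2 * isum m.+1 (fun j => (j - (m - b).+1)%N%:Z).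
    rewrite -mulrDr -isumD. elim: (m.+1) => [|N IH] /=; first by rewrite mulr0.
    rewrite IH; ring.
  have h1 := isum_KmJ m.+1 b.-1. have h2 := isum_JmS m.+1 (m - b).+1.
  move: h1 h2. have -> : (b.-1 - m.+1 = 0)%N by lia.
  have -> : (m.+1 - (m - b).+1 = b)%N by lia.
  rewrite /tri. case: b hb {hno hno' Hin Hin' Hterm hmod0 hmod htr t} => [|b] hb /=; nia.
move: Hsum. set A := isum m.+1 (fun j => `|t - x j|).
set B := isum m.+1 (fun j => `|t + n%:Z - x j|).
set K := (m.+1 * n + 2 * tri b.-1)%N => Hsum.
case: (leP A B) => hc.
  exists t; split => //; right. rewrite -/A. clearbody A B K. lia.
exists (t + n%:Z); split; last first.
  right. have -> : isum m.+1 (fun j => `|t + n%:Z - x j|) = B by [].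
  clearbody A B K. lia.
have -> : t + n%:Z - r = (t - r) + n%:Z by ring. by rewrite rpredD // dvdzz.
Qed.

End P7.


Section P8.
Local Open Scope ring_scope.

Definition mkv (n m : nat) (a : int) (g : nat -> int) : tup m :=
  [ffun k : 'I_(m.+2) => if (k : nat) == 0%N then a
     else if (k : nat) == m.+1 then ((- (a + isum m (fun i => g i.+1))) %% n%:Z)%Z else g k].

Lemma isum_shift N (f : nat -> int) : isum N.+1 f = f 0%N + isum N (fun i => f i.+1).
Proof. elim: N => [|N IH]; first by rewrite /= add0r addr0.
change (isum N.+2 f) with (isum N.+1 f + f N.+1). rewrite IH.
change (isum N.+1 (fun i => f i.+1)) with (isum N (fun i => f i.+1) + f N.+1). ring. Qed.

Lemma isum_ends N (f : nat -> int) : isum N.+2 f = f 0%N + isum N (fun i => f i.+1) + f N.+1.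
Proof. change (isum N.+2 f) with (isum N.+1 f + f N.+1). by rewrite isum_shift. Qed.

Lemma cd_mkv n m a g j : (j <= m.+1)%N -> cd m (mkv n m a g) j =
  if j == 0%N then a else if j == m.+1 then ((- (a + isum m (fun i => g i.+1))) %% n%:Z)%Z else g j.
Proof. move=> hj. by rewrite /Defs.coord /mkv ffunE inordK. Qed.

Lemma Pf_mkv n m a g j : (j <= m)%N -> Pf (mkv n m a g) j = isum j (fun i => g i.+1).
Proof.
move=> hj; rewrite /Pf; apply: isum_ext => i hi. rewrite cd_mkv; last lia.
have -> : (i.+1 == m.+1) = false by lia. done.
Qed.

Lemma mkv_vert (n m : nat) (a : int) (g : nat -> int) : (0 < n)%N -> 0 <= a < n%:Z ->
  (forall j, (1 <= j <= m)%N -> 0 <= g j <= 1) -> vert 0 n m (mkv n m a g).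
Proof.
move=> hn ha hg; split.
- by rewrite cd_mkv.
- rewrite cd_mkv // eqxx. have -> : (m.+1 == 0%N) = false by []. lia.
- move=> j hj; rewrite cd_mkv; last lia.
  have -> : (j == 0%N) = false by lia. have -> : (j == m.+1) = false by lia. exact: hg.
- rewrite sum_tup isum_ends cd_mkv // /=.
  have -> : isum m (fun i => cd m (mkv n m a g) i.+1) = isum m (fun i => g i.+1).
    apply: isum_ext => i hi; rewrite cd_mkv; last lia.
    have -> : (i.+1 == m.+1) = false by lia. done.
  rewrite cd_mkv // eqxx. have -> : (m.+1 == 0%N) = false by [].
  set X := a + isum m (fun i => g i.+1).
  have -> : a + isum m (fun i => g i.+1) + ((- X) %% n%:Z)%Z = ((- X) %% n%:Z)%Z - (- X) by rewrite /X; ring.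
  exact: dvd_mod.
Qed.

Lemma mkv_valid n m a g t : valid n (mkv n m a g) t <-> (n%:Z %| t - a)%Z.
Proof. by rewrite /valid cd_mkv. Qed.

Lemma isum_ge_cnt N p : isum N (fun j => if (p <= j)%N then 1 else 0) = (N - p)%N%:Z.
Proof. elim: N => [|N IH] //=. rewrite IH. case: ifP => h; lia. Qed.

Lemma isum_zshift (h : int -> int) (z N : nat) : (1 <= z)%N -> (z < N)%N ->
  isum N (fun j => h (j%:Z - (if (z <= j)%N then 1 else 0))) = isum N.-1 (fun j => h j%:Z) + h (z%:Z - 1).
Proof.
move=> hz. elim: N => [|N IH] hN //=.
case: (ltnP z N) => hzN.
  rewrite IH //. move: hzN IH hN; case: N => [|N] hzN IH hN; first lia.
  have -> : (z <= N.+1)%N by lia. rewrite /=.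
  have -> : (N.+1)%:Z - 1 = N%:Z by lia. ring.
have hzN' : z = N by lia. subst z. rewrite leqnn.
have -> : isum N (fun j => h (j%:Z - (if (N <= j)%N then 1 else 0))) = isum N (fun j => h j%:Z).
  apply: isum_ext => j hj. have -> : (N <= j)%N = false by lia. by rewrite subr0.
done.
Qed.

Lemma dvd_cases (n : nat) (x : int) : (0 < n)%N -> (n%:Z %| x)%Z -> 0 <= x \/ x <= - n%:Z.
Proof.
move=> hn /dvdzP [q ->]. have [hq|hq] : (0 <= q \/ q <= -1) by lia.
  left; exact: mulr_ge0.
right. have -> : q * n%:Z = - ((- q) * n%:Z) by ring. rewrite lerN2 ler_peMl //; lia.
Qed.

Lemma wit_spread (n m b : nat) : (0 < n)%N -> (2 * b <= m)%N -> (m - 2 * b <= n)%N ->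
  exists y, vert 0 n m y /\ forall t, valid n y t -> (tri b + tri (m - b))%N%:Z <= 2 * Ff y t.
Proof.
move=> hn hb hbn.
set a := ((- (b%:Z)) %% n%:Z)%Z.
exists (mkv n m a (fun _ => 1)); split.
  apply: mkv_vert => //; first by rewrite /a; lia.
move=> t /mkv_valid hv.
have hv' : (n%:Z %| t + b%:Z)%Z.
  have -> : t + b%:Z = (t - a) + (a - (- b%:Z)) by lia.
  by rewrite rpredD // dvd_mod.
have EF : Ff (mkv n m a (fun _ => 1)) t = isum m.+1 (fun j => `|(j : int) - (- t)|).
  rewrite /Ff; apply: isum_ext => j hj. rewrite Pf_mkv; last lia.
  rewrite isum_const mul1r. lia.
rewrite EF.
case: (@dvd_cases n _ hn hv') => h.
  apply: isum_abs_lb1; lia.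
have := @isum_abs_lb2 m.+1 (m - b)%N (- t) ltac:(lia) ltac:(lia) ltac:(lia).
have -> : (m.+1.-1 - (m - b) = b)%N by lia.
by rewrite addnC.
Qed.

Lemma wit_split (n m : nat) : (0 < n)%N ->
  exists y, vert 0 n m y /\ forall t, valid n y t -> ((n * m.+1)./2)%N%:Z <= Ff y t.
Proof.
move=> hn.
set D := ((n * m.+1)./2)%N. set a := (n./2)%N.
set e := (D - m.+1 * a)%N. set p := (m.+1 - e)%N.
have hD : (2 * D <= n * m.+1 <= 2 * D + 1)%N by rewrite /D; lia.
have ha : (2 * a <= n <= 2 * a + 1)%N by rewrite /a; lia.
have he : (m.+1 * a + e = D)%N.
  rewrite /e. suff : (m.+1 * a <= D)%N by lia.
  have : (2 * (m.+1 * a) <= n * m.+1)%N by nia. lia.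
have he2 : (e <= m)%N.
  have : (2 * e <= m.+1)%N.
    have : (n = 2 * a \/ n = 2 * a + 1)%N by lia. case=> hn'.
      have : (2 * D = n * m.+1 \/ 2 * D + 1 = n * m.+1)%N by lia. rewrite hn'. nia.
    have : (2 * D = n * m.+1 \/ 2 * D + 1 = n * m.+1)%N by lia. rewrite hn'. nia.
  lia.
have hp : (1 <= p <= m.+1)%N by rewrite /p; lia.
exists (mkv n m a%:Z (fun j => if j == p then 1 else 0)); split.
  apply: mkv_vert => //; first lia. move=> j _; case: ifP; lia.
move=> t /mkv_valid hv.
have EF : Ff (mkv n m a%:Z (fun j => if j == p then 1 else 0)) t =
    isum m.+1 (fun j => `|t + (if (p <= j)%N then 1 else 0)|).
  rewrite /Ff; apply: isum_ext => j hj. rewrite Pf_mkv; last lia.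
  have -> : isum j (fun i => if i.+1 == p then 1 else 0) = isum j (fun i => if i == p.-1 then 1 else 0).
    apply: isum_ext => i _. have -> : (i.+1 == p) = (i == p.-1) by lia. done.
  rewrite isum_ind. have -> : (p.-1 < j)%N = (p <= j)%N by lia. done.
rewrite EF.
have hcnt := isum_ge_cnt m.+1 p.
case: (@dvd_cases n _ hn hv) => h.
  have H1 : isum m.+1 (fun j => t + (if (p <= j)%N then 1 else 0)) <=
      isum m.+1 (fun j => `|t + (if (p <= j)%N then 1 else 0)|).
    apply: isum_le => j _; exact: ler_norm.
  move: H1; rewrite isumD isum_const hcnt.
  have : (m.+1)%:Z * a%:Z <= t * (m.+1)%:Z.
    rewrite mulrC ler_pM2r; lia.
  lia.
have H1 : isum m.+1 (fun j => - (t + (if (p <= j)%N then 1 else 0))) <=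
    isum m.+1 (fun j => `|t + (if (p <= j)%N then 1 else 0)|).
  apply: isum_le => j _; rewrite -normrN; exact: ler_norm.
have E2 : isum m.+1 (fun j => - (t + (if (p <= j)%N then 1 else 0))) =
   - (isum m.+1 (fun j => t) + isum m.+1 (fun j => (if (p <= j)%N then 1 else 0))).
  rewrite -isumD. elim: (m.+1) => [|N IH] /=; [by rewrite oppr0 | rewrite IH; ring].
move: H1; rewrite E2 isum_const hcnt.
have : t * (m.+1)%:Z <= (a%:Z - n%:Z) * (m.+1)%:Z.
  rewrite ler_pM2r; lia.
move=> h1 h2.
have : (m.+1 * a + e + D <= n * m.+1)%N by lia.
nia.
Qed.


Lemma wit_3b (n m k : nat) : (2 <= n)%N -> m = (n + 2 * k + 1)%N ->
  exists y, vert 0 n m y /\ forall t, valid n y t ->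
     (tri k + tri (n + k) + 2 * n./2)%N%:Z <= 2 * Ff y t.
Proof.
move=> hn hm.
set z := (k + 1 + uphalf n)%N.
have hz : (1 <= z <= m)%N by rewrite /z hm; have := uphalf_half n; lia.
set a := ((- (k%:Z)) %% n%:Z)%Z.
exists (mkv n m a (fun j => if j == z then 0 else 1)); split.
  apply: mkv_vert => //; [lia | rewrite /a; lia | move=> j _; case: ifP; lia].
move=> t /mkv_valid hv.
have hv' : (n%:Z %| t + k%:Z)%Z.
  have -> : t + k%:Z = (t - a) + (a - (- k%:Z)) by lia.
  by rewrite rpredD // dvd_mod.
have EF : Ff (mkv n m a (fun j => if j == z then 0 else 1)) t =
    isum m (fun j => `|(j : int) - (- t)|) + `|(z%:Z - 1) - (- t)|.
  rewrite /Ff.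
  have -> : isum m.+1 (fun j => `|t + Pf (mkv n m a (fun j => if j == z then 0 else 1)) j|)
      = isum m.+1 (fun j => (fun x => `|x - (- t)|) (j%:Z - (if (z <= j)%N then 1 else 0))).
    apply: isum_ext => j hj. rewrite Pf_mkv; last lia.
    have -> : isum j (fun i => if i.+1 == z then 0 else 1) = isum j (fun i => 1 + (if i == z.-1 then -1 else 0)).
      apply: isum_ext => i _. have -> : (i.+1 == z) = (i == z.-1) by lia. case: ifP; lia.
    rewrite isumD isum_const isum_ind. have -> : (z.-1 < j)%N = (z <= j)%N by lia.
    case: ifP => _; lia.
  by rewrite (@isum_zshift (fun x => `|x - - t|) z m.+1); [|lia|lia].
have hu := uphalf_half n.
rewrite EF.
case: (@dvd_cases n _ ltac:(lia) hv') => h.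
  have := @isum_abs_lb1 m k (- t) ltac:(lia) ltac:(lia) ltac:(lia).
  have -> : (m.-1 - k = n + k)%N by lia.
  have : (n./2)%:Z <= `|z%:Z - 1 - - t| by rewrite /z; lia.
  lia.
have := @isum_abs_lb2 m (n + k)%N (- t) ltac:(lia) ltac:(lia) ltac:(lia).
have -> : (m.-1 - (n + k) = k)%N by lia.
have : (n./2)%:Z <= `|z%:Z - 1 - - t| by rewrite /z; lia.
lia.
Qed.

End P8.


Definition d0v (n m : nat) : nat := ('C((m + n)./2 + 1, 2) + 'C(uphalf (m - n) + 1, 2))%N.
Definition condA (n m : nat) : bool := (2 %| m - n) || (n <= uphalf m.+1).
Definition Dval (n m : nat) : nat :=
  if (m <= n)%N then ((n * m.+1)./2)%N
  else if condA n m then d0v n m else (d0v n m + n - uphalf m.+1)%N.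

Lemma C2 x : ('C(x + 1, 2) * 2 = tri x)%N.
Proof. rewrite addn1 /tri. elim: x => [|x IH] //. rewrite binS bin1. lia. Qed.

Section P9.
Local Open Scope ring_scope.

Lemma vert_mono (n m : nat) (lo : int) (y : tup m) : lo <= 0 -> vert 0 n m y -> vert lo n m y.
Proof. move=> hlo [h1 h2 h3 h4]; split => // j hj. have := h3 j hj. lia. Qed.

Lemma arith_ub_small (n m : nat) : (m <= n)%N ->
  (tri 0 + tri (m - 0) <= 2 * Dval n m)%N /\ (m.+1 * n + 2 * tri 0%N.-1 <= 2 * Dval n m + 1)%N.
Proof.
move=> hmn. rewrite /Dval hmn subn0.
have h1 : (m * m.+1 <= n * m.+1)%N by rewrite leq_mul2r hmn orbT.
have hC := C2 m. rewrite /tri in hC *.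
rewrite (mulnC m.+1 n).
move: h1 hC. move: (m * m.+1)%N (n * m.+1)%N ('C(m + 1, 2)) => X Y C. lia.
Qed.

Lemma half_parity (x : nat) : exists k, x = (2 * k)%N \/ x = (2 * k + 1)%N.
Proof. exists x./2. lia. Qed.

Lemma arith_ub_big (n m : nat) : (0 < n)%N -> (n < m)%N ->
  (tri (uphalf (m - n)) + tri (m - uphalf (m - n)) <= 2 * Dval n m)%N /\
  (m.+1 * n + 2 * tri (uphalf (m - n)).-1 <= 2 * Dval n m + 1)%N.
Proof.
move=> hn hnm. rewrite /Dval /d0v.
have -> : (m <= n)%N = false by lia.
have e1 := C2 ((m + n)./2). have e2 := C2 (uphalf (m - n)).
have [k [hk|hk]] := half_parity (m - n).
- have hb : uphalf (m - n) = k by lia.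
  have ha : ((m + n)./2 = n + k)%N by lia.
  have hmb : (m - uphalf (m - n) = n + k)%N by lia.
  have hc : condA n m by rewrite /condA; apply/orP; left; rewrite hk dvdn_mulr.
  rewrite hc hmb hb. rewrite ha in e1. rewrite hb in e2.
  have -> : (m.+1 = n + 2 * k + 1)%N by lia.
  rewrite /tri in e1 e2 *. rewrite ha.
  move: e1 e2; move: ('C(n + k + 1, 2)) ('C(k + 1, 2)) => C1 C3 e1 e2.
  case: k {hk hb ha hmb} e1 e2 => [|k] e1 e2 /=; nia.
- have hb : uphalf (m - n) = k.+1 by lia.
  have ha : ((m + n)./2 = n + k)%N by lia.
  have hmb : (m - uphalf (m - n) = n + k)%N by lia.
  rewrite hmb hb. rewrite ha in e1. rewrite hb in e2.
  have hu : (uphalf m.+1 = k + 1 + uphalf n)%N by lia.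
  have hm1 : (m.+1 = n + 2 * k + 2)%N by lia.
  have hcA : condA n m = (n <= k + 1 + uphalf n)%N.
    rewrite /condA hk. have -> : (2 %| 2 * k + 1)%N = false by lia. by rewrite hu.
  rewrite hcA hu hm1 ha.
  rewrite /tri in e1 e2 *.
  have hup := uphalf_half n.
  move: e1 e2; move: ('C(n + k + 1, 2)) ('C(k.+1 + 1, 2)) => C1 C3 e1 e2 /=.
  case: ifP => hc; nia.
Qed.


Lemma arith_lb_big (n m : nat) : (0 < n)%N -> (n < m)%N ->
  (condA n m -> (2 * Dval n m = tri (uphalf (m - n)) + tri (m - uphalf (m - n)))%N) /\
  (~~ condA n m -> exists k, [/\ m = (n + 2 * k + 1)%N, (2 <= n)%N &
       (2 * Dval n m = tri k + tri (n + k) + 2 * n./2)%N]).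
Proof.
move=> hn hnm. rewrite /Dval /d0v.
have -> : (m <= n)%N = false by lia.
have e1 := C2 ((m + n)./2). have e2 := C2 (uphalf (m - n)).
have ha : ((m + n)./2 = m - uphalf (m - n))%N by lia.
split.
  move=> ->. rewrite -ha. lia.
move=> hc. rewrite (negPf hc).
have [k [hk|hk]] := half_parity (m - n).
  move: hc; rewrite /condA hk. have -> : (2 %| 2 * k)%N by lia. done.
have hu : (uphalf m.+1 = k + 1 + uphalf n)%N by lia.
have hcA : condA n m = (n <= k + 1 + uphalf n)%N.
  rewrite /condA hk. have -> : (2 %| 2 * k + 1)%N = false by lia. by rewrite hu.
move: hc; rewrite hcA => hc.
exists k; split; [lia | lia | ].
have hb : uphalf (m - n) = k.+1 by lia.
have ha' : ((m + n)./2 = n + k)%N by lia.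
rewrite hu ha' hb. rewrite ha' in e1. rewrite hb in e2.
have hup := uphalf_half n.
rewrite /tri in e1 e2 *.
have ek : (k.+1 * k.+2 = k * k.+1 + 2 * k + 2)%N by nia.
move: e1 e2 ek; move: ('C(n + k + 1, 2)) ('C(k.+1 + 1, 2)) ((n + k) * (n + k).+1)%N (k.+1 * k.+2)%N (k * k.+1)%N
  => C1 C3 P Q R e1 e2 ek. move: hc hup. lia.
Qed.

Lemma ecc_main (n m : nat) (lo : int) : (0 < n)%N -> lo <= 0 -> -1 <= lo ->
  ecc_is (vert lo n m) (adj n m) (zero_vertex m) (Dval n m).
Proof.
move=> hn hlo hlo1; split.
  move=> y hy.
  set b := if (m <= n)%N then 0%N else uphalf (m - n).
  have h2b : (2 * b <= m)%N by rewrite /b; case: ifP; lia.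
  have hst : forall j, (j < m)%N -> `|(- Pf y j.+1) - (- Pf y j)| <= 1.
    move=> j hj. rewrite PfS. have [_ _ hmid _] := hy. have := hmid j.+1 ltac:(lia). lia.
  have [t [ht hS]] := @ub_pure n m b (fun j => - Pf y j) (cd m y 0) hn h2b hst.
  have hF : Ff y t <= (Dval n m)%:Z.
    have -> : Ff y t = isum m.+1 (fun j => `|t - (- Pf y j)|).
      rewrite /Ff; apply: isum_ext => j _; by rewrite opprK.
    move: hS; rewrite /b; case: ifP => hmn.
      have [h1 h2] := @arith_ub_small n m hmn. lia.
    have [h1 h2] := @arith_ub_big n m hn ltac:(lia). lia.
  exact: (@reach n m lo (Dval n m) hn hlo y t hy ht hF).
have [y [hy hF]] : exists y, vert 0 n m y /\ forall t, valid n y t -> (Dval n m)%:Z <= Ff y t.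
  case: (leqP m n) => hmn.
    have [y [hy hF]] := @wit_split n m hn. exists y; split => // t ht.
    rewrite /Dval hmn. exact: hF.
  have [hA hB] := @arith_lb_big n m hn hmn.
  case: (boolP (condA n m)) => hc.
    have [y [hy hF]] := @wit_spread n m (uphalf (m - n)) hn ltac:(lia) ltac:(lia).
    exists y; split => // t ht. have := hF t ht. rewrite -(hA hc). lia.
  have [k [hm hn2 hD]] := hB hc.
  have [y [hy hF]] := @wit_3b n m k hn2 hm.
  exists y; split => // t ht. have := hF t ht. rewrite -hD. lia.
exists y; split; first exact: vert_mono.
exact: (@lower_bound n m lo y (Dval n m) hF).
Qed.

Lemma ecc_uniq {T : Type} (V : T -> Prop) (E : T -> T -> Prop) x d1 d2 :
  ecc_is V E x d1 -> ecc_is V E x d2 -> d1 = d2.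
Proof.
move=> [H1 [y1 [hy1 N1]]] [H2 [y2 [hy2 N2]]].
have [k1 [hk1 hw1]] := H1 y2 hy2. have [k2 [hk2 hw2]] := H2 y1 hy1.
have : ~ (k1 < d2)%N by move=> h; exact: N2 k1 h hw1.
have : ~ (k2 < d1)%N by move=> h; exact: N1 k2 h hw2.
lia.
Qed.

End P9.

Unset Implicit Arguments.

Theorem theorem5p55 (n m : nat) (hn : (1 <= n)%N) :
  (forall d : nat, eccZ n m d <-> eccY n m d) /\
  (n = 1%N -> eccZ n m ('C(uphalf m + 1, 2) + 'C(m./2 + 1, 2))) /\
  ((m <= n)%N -> eccZ n m ((n * (m + 1))./2)) /\
  ((2 <= n)%N -> (n <= m)%N ->
     let d0 := ('C((m + n)./2 + 1, 2) + 'C(uphalf (m - n) + 1, 2))%N in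
     (((2 %| m - n) || (n <= uphalf m.+1)) -> eccZ n m d0) /\
     (~~ ((2 %| m - n) || (n <= uphalf m.+1)) ->
        eccZ n m (d0 + n - uphalf m.+1))).
Proof.
have HZ : eccZ n m (Dval n m) by apply: ecc_main => //; lia.
have HY : eccY n m (Dval n m) by apply: ecc_main => //; lia.
split.
  move=> d; split => H; [rewrite (ecc_uniq H HZ) | rewrite (ecc_uniq H HY)]; done.
split.
  move=> hn1. subst n.
  suff -> : ('C(uphalf m + 1, 2) + 'C(m./2 + 1, 2) = Dval 1 m)%N by [].
  rewrite /Dval. case: ifP => hm.
    by clear HZ HY; case: m hm => [|[|m]].
  have -> : condA 1 m by rewrite /condA; apply/orP; right; lia.
  rewrite /d0v.
  have -> : ((m + 1)./2 = uphalf m)%N by lia.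
  have -> : (uphalf (m - 1) = m./2)%N by lia.
  done.
split.
  move=> hmn. move: HZ; rewrite /Dval hmn addn1. done.
move=> h2 hnm d0.
case: (eqVneq m n) => [hmn|hmn].
  subst m.
  have hc : (2 %| n - n) || (n <= uphalf n.+1) by rewrite subnn dvdn0.
  split; last by rewrite hc.
  move=> _. move: HZ. rewrite /Dval leqnn.
  have -> : ((n * n.+1)./2 = d0)%N.
    rewrite /d0 subnn /=. have := C2 n. rewrite /tri.
    have -> : ((n + n)./2 = n)%N by lia. have -> : 'C(0 + 1, 2) = 0%N by []. move: ('C(n + 1, 2)) (n * n.+1)%N => C P. rewrite addn0. lia.
  done.
have hlt : (m <= n)%N = false by lia.
split => hc; move: HZ; rewrite /Dval hlt.
  by rewrite /condA hc.
by rewrite /condA (negPf hc).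
Qed.
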